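(* Let $\beta>0$ and $\alpha>0$, and define $f:[0,1]\to\mathbb{R}$ by $f(k)=\alpha k(1-k)^{\beta}$. If $$\left(\frac{\beta+1}{\beta}\right)^{\beta}<\alpha\leq(\beta+1)\left(\frac{\beta+1}{\beta}\right)^{\beta},$$ then $f$ maps $[0,1]$ into itself and $f\in\mathfrak{G}$ (with $[a,b]=[0,1]$).
   Context: $\mathfrak{G}$ denotes the set of continuous maps $g$ from a closed interval $[a,b]$ into itself satisfying: (1) there exists $m\in(a,b)$ such that $g$ is strictly increasing on $[a,m]$ and strictly decreasing on $[m,b]$; (2) $g(a)\geq a$, $g(b)<b$, and $g(x)>x$ for all $x\in(a,m]$. *)

(* Defs.v *)
From HB Require Import structures.
From mathcomp Require Import all_boot all_order all_algebra.
From mathcomp Require Import all_classical all_reals all_analysis.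
Set Implicit Arguments. Unset Strict Implicit. Unset Printing Implicit Defensive.
Import Order.TTheory GRing.Theory Num.Theory.
Import numFieldNormedType.Exports.
Local Open Scope classical_set_scope.
Local Open Scope ring_scope.

Definition frakG (R : realType) (a b : R) (g : R -> R) : Prop :=
  [/\ a < b,
      {within `[a, b], continuous g},
      (forall x, a <= x <= b -> a <= g x <= b) &
      exists m : R,
        a < m < b /\
        (forall x y, a <= x -> x < y -> y <= m -> g x < g y) /\
        (forall x y, m <= x -> x < y -> y <= b -> g y < g x) /\
        a <= g a /\ g b < b /\
        (forall x, a < x <= m -> x < g x)].

(* Main.v *)
Require Import Defs.
From HB Require Import structures.
From mathcomp Require Import all_boot all_order all_algebra.
From mathcomp Require Import all_classical all_reals all_analysis.
From mathcomp Require Import ring lra.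
Set Implicit Arguments. Unset Strict Implicit. Unset Printing Implicit Defensive.
Import Order.TTheory GRing.Theory Num.Theory.
Import numFieldNormedType.Exports.
Local Open Scope classical_set_scope.
Local Open Scope ring_scope.

Section H.
Variable R : realType.

Lemma lnA (u v : R) : 0 < u -> 0 < v -> ln u - ln v <= (u - v) / v.
Proof.
move=> u0 v0; rewrite -ln_div ?posrE //.
have := @le_ln1Dx R (u / v - 1).
rewrite addrCA subrr addr0 => /(_ _) H.
have -> : (u - v) / v = u / v - 1 by rewrite mulrBl divff ?gt_eqF.
apply: H; rewrite ltrBrDl subrr divr_gt0 //.
Qed.

Lemma lnB (u v : R) : 0 < u -> 0 < v -> u != v -> ln u - ln v < (u - v) / v.
Proof.
move=> u0 v0 uv.
set s := Num.sqrt u; set t := Num.sqrt v.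
have s0 : 0 < s by rewrite sqrtr_gt0.
have t0 : 0 < t by rewrite sqrtr_gt0.
have us : u = s ^+ 2 by rewrite sqr_sqrtr // ltW.
have vt : v = t ^+ 2 by rewrite sqr_sqrtr // ltW.
have st : s != t by apply: contra uv => /eqP e; rewrite us vt e.
have e1 : ln u - ln v = (ln s - ln t) *+ 2 by rewrite us vt !lnXn // mulrnBl.
rewrite e1 (le_lt_trans (ler_wMn2r 2 (lnA s0 t0))) //.
rewrite us vt.
have t20 : t ^+ 2 != 0 by rewrite expf_neq0 // gt_eqF.
have -> : (s ^+ 2 - t ^+ 2) / t ^+ 2 = (s / t) ^+ 2 - 1 by rewrite mulrBl divff // expr_div_n.
have -> : (s - t) / t = s / t - 1 by rewrite mulrBl divff // gt_eqF.
have : s / t != 1.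
  apply: contra st => /eqP e; apply/eqP.
  have -> : s = s / t * t by rewrite divfK // gt_eqF.
  by rewrite e mul1r.
move: (s / t) => w w1.
have : 0 < (w - 1) ^+ 2 by rewrite exprn_even_gt0 // subr_eq0.
rewrite mulr2n; nra.
Qed.


Lemma shift1 : (fun k : R => 1 - k) @ 1^'- --> 0^'+.
Proof.
move=> P /= HP; rewrite /at_right /at_left /within /= in HP *.
move: HP => /nbhs_ballP [e e0 He].
rewrite nbhs_simpl /=.
apply/nbhs_ballP; exists e => // k /= dk k1; apply: He.
  by move: dk; rewrite /ball /= sub0r normrN.
by rewrite subr_gt0.
Qed.

Lemma cont_pow (b x : R) : 0 < x -> {for x, continuous (fun y => y `^ b)}.
Proof.
move=> x0; apply: differentiable_continuous; apply/derivable1_diffP.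
by have [] := is_derive1_powR b x0.
Qed.

Lemma cont_g (a b x : R) : x < 1 -> {for x, continuous (fun k => a * k * (1 - k) `^ b)}.
Proof.
move=> x1; apply: cvgM; first by apply: cvgM => //; apply: cvg_cst.
have H1 : {for x, continuous (fun k : R => 1 - k)}.
  by apply: cvgB => //; apply: cvg_cst.
have H2 : {for (1 - x), continuous (fun y : R => y `^ b)}.
  by apply: cont_pow; rewrite subr_gt0.
exact: (continuous_comp H1 H2).
Qed.

Lemma lim1 (a b : R) : 0 < b -> (fun k => a * k * (1 - k) `^ b) @ 1^'- --> a * 1 * (1 - 1) `^ b.
Proof.
move=> b0; rewrite subrr powR0 ?gt_eqF // mulr0.
rewrite -[X in _ --> X](mulr0 (a * 1)).
apply: cvgM.
  apply: cvgM; first exact: cvg_cst.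
  exact: cvg_at_left_filter.
exact: (cvg_comp _ _ shift1 (powR_cvg0 b0)).
Qed.
End H.

Section M.
Variable R : realType.
Variables alpha beta : R.
Hypothesis b0 : 0 < beta.
Hypothesis a0 : 0 < alpha.
Let g := fun k : R => alpha * k * (1 - k) `^ beta.
Let m := (beta + 1)^-1.

Lemma m_gt0 : 0 < m. Proof. move: (b0) (a0) => bb aa. rewrite invr_gt0. lra. Qed.
Lemma m_lt1 : m < 1. Proof. move: (b0) (a0) => bb aa. by rewrite invf_lt1; lra. Qed.
Lemma le_m y : 0 < y -> (y <= m) = (y * (beta + 1) <= 1).
Proof. move: (b0) (a0) => bb aa. by move=> y0; rewrite /m -ler_pdivlMr ?div1r //; lra. Qed.
Lemma ge_m y : 0 < y -> (m <= y) = (1 <= y * (beta + 1)).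
Proof. move: (b0) (a0) => bb aa. by move=> y0; rewrite /m -ler_pdivrMr ?div1r //; lra. Qed.

Lemma g_gt0 k : 0 < k < 1 -> 0 < g k.
Proof. move: (b0) (a0) => bb aa.
case/andP=> k0 k1; rewrite /g mulr_gt0 ?powR_gt0 ?mulr_gt0 //; lra.
Qed.

Lemma ln_g k : 0 < k < 1 -> ln (g k) = ln alpha + ln k + beta * ln (1 - k).
Proof. move: (b0) (a0) => bb aa.
case/andP=> k0 k1; rewrite /g lnM ?posrE ?mulr_gt0 ?powR_gt0 //; last lra.
by rewrite lnM ?posrE // ln_powR.
Qed.

Lemma g0 : g 0 = 0. Proof. move: (b0) (a0) => bb aa. by rewrite /g mulr0 mul0r. Qed.
Lemma g1 : g 1 = 0. Proof. move: (b0) (a0) => bb aa. by rewrite /g subrr powR0 ?mulr0 // gt_eqF. Qed.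

Lemma g_inc x y : 0 <= x -> x < y -> y <= m -> g x < g y.
Proof. move: (b0) (a0) => bb aa.
move=> x0 xy ym.
have y1 : y < 1 by apply: le_lt_trans ym m_lt1.
have y0 : 0 < y by apply: le_lt_trans xy.
have gy : 0 < g y by apply: g_gt0; rewrite y0 y1.
case: (eqVneq x 0) => [->|xn0]; first by rewrite g0.
have {xn0} x0' : 0 < x by rewrite lt_def xn0 x0.
rewrite -ltr_ln ?posrE ?g_gt0 ?x0' ?y0 ?y1 //; last by rewrite (lt_trans xy).
rewrite !ln_g ?x0' ?y0 ?y1 ?(lt_trans xy) //.
have A := lnA (u := 1 - x) (v := 1 - y) ltac:(lra) ltac:(lra).
have B := lnB (u := x) (v := y) x0' y0 ltac:(by rewrite lt_eqF).
move: ym; rewrite le_m // => ym.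
set r1 := (1 - x - (1 - y)) / (1 - y) in A.
set r2 := (x - y) / y in B.
have e1 : r1 * (1 - y) = y - x by rewrite /r1 divfK; [lra | rewrite gt_eqF //; lra].
have e2 : r2 * y = x - y by rewrite /r2 divfK // gt_eqF.
have r1p : 0 <= r1 by rewrite /r1 divr_ge0 //; lra.
have H1 : beta * r1 * y <= r1 * (1 - y) by nra.
have H2 : beta * r1 + r2 <= 0 by nra.
have H3 : beta * (ln (1 - x) - ln (1 - y)) <= beta * r1 by rewrite ler_pM2l.
lra.
Qed.

Lemma g_dec x y : m <= x -> x < y -> y <= 1 -> g y < g x.
Proof. move: (b0) (a0) => bb aa.
move=> xm xy y1.
have x0 : 0 < x by apply: lt_le_trans xm; exact: m_gt0.
have x1 : x < 1 by apply: lt_le_trans y1.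
have gx : 0 < g x by apply: g_gt0; rewrite x0 x1.
case: (eqVneq y 1) => [->|yn1]; first by rewrite g1.
have {yn1} y1' : y < 1 by rewrite lt_def eq_sym yn1 y1.
have y0 : 0 < y by apply: lt_trans xy.
rewrite -ltr_ln ?posrE ?g_gt0 ?x0 ?y0 ?y1' ?x1 //.
rewrite !ln_g ?x0 ?y0 ?y1' ?x1 //.
have A := lnA (u := 1 - y) (v := 1 - x) ltac:(lra) ltac:(lra).
have B := lnB (u := y) (v := x) y0 x0 ltac:(by rewrite gt_eqF).
move: xm; rewrite ge_m // => xm.
set r1 := (1 - y - (1 - x)) / (1 - x) in A.
set r2 := (y - x) / x in B.
have e1 : r1 * (1 - x) = x - y by rewrite /r1 divfK; [lra | rewrite gt_eqF //; lra].
have e2 : r2 * x = y - x by rewrite /r2 divfK // gt_eqF.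
have r2p : 0 <= r2 by rewrite /r2 divr_ge0 //; lra.
have H1 : r2 <= - (beta * r1) by nra.
have H3 : beta * (ln (1 - y) - ln (1 - x)) <= beta * r1 by rewrite ler_pM2l.
lra.
Qed.

Let c := ln ((beta + 1) / beta).

Lemma ln1m : ln (1 - m) = - c.
Proof. move: (b0) (a0) => bb aa.
have -> : 1 - m = ((beta + 1) / beta)^-1.
  rewrite /m invf_div; field; lra.
by rewrite lnV // posrE divr_gt0 //; lra.
Qed.

Lemma lnm : ln m = - ln (beta + 1).
Proof. move: (b0) (a0) => bb aa. by rewrite /m lnV // posrE; lra. Qed.

Lemma g_fix x : 0 < x <= m -> ((beta + 1) / beta) `^ beta < alpha -> x < g x.
Proof. move: (b0) (a0) => bb aa.
case/andP=> x0 xm H.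
have x1 : x < 1 by apply: le_lt_trans xm m_lt1.
rewrite -ltr_ln ?posrE ?g_gt0 ?x0 ?x1 // ln_g ?x0 ?x1 //.
have {}H : beta * c < ln alpha.
  rewrite /c -ln_powR ltr_ln ?posrE ?powR_gt0 ?divr_gt0 //; lra.
have : ln (1 - m) <= ln (1 - x).
  rewrite ler_ln ?posrE; try lra; have := m_lt1; lra.
rewrite ln1m => H2.
have : beta * - c <= beta * ln (1 - x) by rewrite ler_pM2l.
lra.
Qed.

Lemma g_le_gm k : 0 <= k <= 1 -> g k <= g m.
Proof. move: (b0) (a0) => bb aa.
case/andP=> k0 k1.
case: (ltgtP k m) => [km|mk|->] //.
- by apply/ltW/g_inc.
- by apply/ltW/g_dec => //; exact/ltW.
Qed.

Lemma gm_le1 : alpha <= (beta + 1) * ((beta + 1) / beta) `^ beta -> g m <= 1.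
Proof. move: (b0) (a0) => bb aa.
move=> H.
have m1 := m_lt1; have m0 := m_gt0.
rewrite -ler_ln ?posrE ?g_gt0 ?m0 ?m1 // ln_g ?m0 ?m1 // ln1 ln1m lnm.
have {}H : ln alpha <= ln (beta + 1) + beta * c.
  rewrite /c -ln_powR -lnM ?posrE ?powR_gt0 ?divr_gt0 //; try lra.
  rewrite ler_ln ?posrE ?mulr_gt0 ?powR_gt0 ?divr_gt0 //; lra.
lra.
Qed.
End M.

Theorem lemma2p1 (R : realType) (alpha beta : R) :
  0 < beta -> 0 < alpha ->
  ((beta + 1) / beta) `^ beta < alpha ->
  alpha <= (beta + 1) * ((beta + 1) / beta) `^ beta ->
  (forall k : R, 0 <= k <= 1 -> 0 <= alpha * k * (1 - k) `^ beta <= 1) /\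
  frakG 0 1 (fun k : R => alpha * k * (1 - k) `^ beta).
Proof.
move=> b0 a0 H1 H2.
have B : forall k : R, 0 <= k <= 1 -> 0 <= alpha * k * (1 - k) `^ beta <= 1.
  move=> k /[dup] /andP[k0 k1] kk; apply/andP; split.
    by rewrite mulr_ge0 ?powR_ge0 ?mulr_ge0 // ltW.
  apply: le_trans (g_le_gm b0 a0 kk) _.
  exact: (gm_le1 b0 a0).
split=> //; split=> //.
- apply/continuous_within_itvP => //; split.
  + move=> x; rewrite in_itv /= => /andP[_ x1]; exact: cont_g.
  + by apply: cvg_at_right_filter; apply: cont_g.
  + exact: lim1.
- exists (beta + 1)^-1; split; first by rewrite (m_gt0 (alpha:=alpha) b0 a0) (m_lt1 (alpha:=alpha) b0 a0).
  split; first by move=> x y x0 xy ym; exact: (g_inc (alpha:=alpha) b0 a0).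
  split; first by move=> x y xm xy y1; exact: (g_dec (alpha:=alpha) b0 a0).
  split; first by rewrite mulr0 mul0r.
  split; first by rewrite subrr powR0 ?mulr0 // gt_eqF.
  by move=> x xm; exact: (g_fix b0 a0).
Qed.
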